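(* For all integers $n\geq 0$ and $p\geq 0$, \[ \sum_{j=0}^n \binom{p+j}{j}\binom{2(n-j)}{n-j}4^{j}O_{n-j} = 2^{2n-1}\binom{n+p+1}{n}\bigl(H_{n+p+1}-H_{p+1}\bigr) - \sum_{j=1}^n \binom{p+j}{j-1}4^{j-1}C_{n-j}\bigl(H_{p+j}-H_{p+1}\bigr). \] In particular, \[ \sum_{j=0}^n \binom{2j}{j}\frac{O_j}{4^j} = \frac{n+1}{2}\bigl(H_{n+1}-1\bigr) - \sum_{j=1}^n \frac{j\,C_{n-j}}{4^{n+1-j}}\bigl(H_j-1\bigr). \]
   Context: $H_n=\sum_{j=1}^n \frac1j$ is the $n$th harmonic number ($H_0=0$), $O_n=\sum_{j=1}^n\frac{1}{2j-1}$ is the $n$th odd harmonic number ($O_0=0$), and $C_n=\frac{1}{n+1}\binom{2n}{n}$ is the $n$th Catalan number. *)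

(* Defs.v *)
From mathcomp Require Import all_boot all_order all_algebra.
Set Implicit Arguments. Unset Strict Implicit. Unset Printing Implicit Defensive.
Import Order.TTheory GRing.Theory Num.Theory.
Local Open Scope ring_scope.

Definition harm (n : nat) : rat := \sum_(1 <= j < n.+1) (j%:R)^-1.

Definition oharm (n : nat) : rat := \sum_(1 <= j < n.+1) ((2 * j - 1)%N%:R)^-1.

Definition catalan (n : nat) : rat := 'C(2 * n, n)%:R / (n.+1)%:R.

(* Main.v *)
Require Import Defs.
From mathcomp Require Import all_boot all_order all_algebra.
From mathcomp Require Import ring lra zify.
Import Order.TTheory GRing.Theory Num.Theory.
Local Open Scope ring_scope.

Fixpoint rf (s : rat) (n : nat) : rat :=
  if n is m.+1 then rf s m * (s + m%:R) * 4 / (m.+1)%:R else 1.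
Fixpoint hh (s : rat) (n : nat) : rat :=
  if n is m.+1 then hh s m + (s + m%:R)^-1 else 0.
Definition gg s n := rf s n * hh s n.

Lemma n1ne0 n : 1 + n%:R != 0 :> rat.
Proof. by rewrite addrC natr1 pnatr_eq0. Qed.

Lemma rfS s n : (n.+1)%:R * rf s n.+1 = 4 * (s + n%:R) * rf s n.
Proof. by rewrite /=; field; rewrite n1ne0. Qed.

Lemma ggS s n : (forall k, s + k%:R != 0) ->
  (n.+1)%:R * gg s n.+1 = 4 * (s + n%:R) * gg s n + 4 * rf s n.
Proof. move=> H; rewrite /gg /=; by field; rewrite H n1ne0. Qed.

Lemma conv_step (A B : nat -> rat) n :
 (n.+1)%:R * \sum_(0 <= j < n.+2) A j * B (n.+1 - j)%N =
 \sum_(0 <= i < n.+1) ((i.+1)%:R * A i.+1) * B (n - i)%N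
 + \sum_(0 <= i < n.+1) A i * ((n - i).+1%:R * B (n - i).+1).
Proof.
rewrite big_distrr /=.
rewrite (eq_big_nat _ _ (F2 := fun j => (j%:R * A j) * B (n.+1 - j)%N
     + A j * ((n.+1 - j)%N%:R * B (n.+1 - j)%N))); last first.
  move=> j /andP[_ hj].
  have E : (n.+1)%:R = j%:R + (n.+1-j)%N%:R :> rat by rewrite -natrD subnKC.
  rewrite E; ring.
rewrite big_split /=; congr (_ + _).
  rewrite big_nat_recl //= !mul0r add0r.
  by apply: eq_bigr => i _; rewrite subSS.
rewrite big_nat_recr //= subnn !mul0r mulr0 addr0.
by apply: eq_big_nat => i /andP[_ hi]; rewrite subSn.
Qed.

Lemma conv_f a b n :
  \sum_(0 <= j < n.+1) rf a j * rf b (n - j)%N = rf (a + b) n.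
Proof.
elim: n => [|n IH]; first by rewrite big_nat1 /= mul1r.
apply: (mulfI (x := (n.+1)%:R)); first by rewrite pnatr_eq0.
rewrite conv_step rfS.
under eq_bigr do rewrite rfS.
under [X in _ + X]eq_bigr do rewrite rfS.
rewrite -big_split -IH big_distrr /=.
apply: eq_big_nat => i /andP[_ hi].
rewrite natrB ?(ltnSE hi) //. set t := rf b _. ring.
Qed.

Lemma conv_g a b n : (forall k, a + k%:R != 0) -> (forall k, a + b + k%:R != 0) ->
  \sum_(0 <= j < n.+1) gg a j * rf b (n - j)%N = gg (a + b) n.
Proof.
move=> Ha Hab.
elim: n => [|n IH]; first by rewrite big_nat1 /gg /= !mulr0 mul0r.
apply: (mulfI (x := (n.+1)%:R)); first by rewrite pnatr_eq0.
rewrite conv_step.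
under eq_bigr do rewrite (ggS _ _ Ha).
under [X in _ + X]eq_bigr do rewrite rfS.
rewrite (ggS _ _ Hab) -IH -conv_f !big_distrr -!big_split /=.
apply: eq_big_nat => i /andP[_ hi].
rewrite natrB ?(ltnSE hi) //.
set t := rf b _. set u := gg a i. set v := rf a i. ring.
Qed.

Lemma rf_nat q j : rf q.+1%:R j = 'C(q + j, j)%:R * 4 ^+ j.
Proof.
elim: j => [|j IH]; first by rewrite bin0 /= mul1r.
have E : ('C(q + j.+1, j.+1) * j.+1 = (q + j).+1 * 'C(q + j, j))%N.
  by rewrite addnS mul_bin_diag mulnC.
have E' : 'C(q + j.+1, j.+1)%:R = (q+j).+1%:R * 'C(q+j,j)%:R / j.+1%:R :> rat.
  by rewrite -natrM -E natrM mulfK // pnatr_eq0.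
rewrite /= IH E' exprS -addSn natrD; field.
by rewrite n1ne0.
Qed.

Lemma cbin_rec k : ('C(2 * k.+1, k.+1) * k.+1 = 2 * (2 * k).+1 * 'C(2 * k, k))%N.
Proof.
have h1 := mul_bin_diag (2*k).+2 k.
have h2 := mul_bin_diag (2*k).+1 k.
have h3 : 'C((2*k).+1, k.+1) = 'C((2*k).+1, k).
  rewrite -[in LHS](bin_sub (n:=(2*k).+1) (m:=k.+1)); last by lia.
  congr 'C(_, _); lia.
rewrite (_ : 2 * k.+1 = (2*k).+2)%N; last by lia.
simpl in h1, h2. rewrite h3 in h2. rewrite mulnC -h1. nia.
Qed.

Lemma rf_half k : rf 2^-1 k = 'C(2 * k, k)%:R.
Proof.
elim: k => [|k IH]; first by rewrite muln0 bin0.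
have E' : 'C(2 * k.+1, k.+1)%:R = 2 * (2 * k).+1%:R * 'C(2 * k, k)%:R / k.+1%:R :> rat.
  by rewrite -(natrM _ 2) -natrM -cbin_rec natrM mulfK // pnatr_eq0.
rewrite /= IH E' (_ : (2*k).+1 = 2*k+1)%N; last by rewrite addn1.
rewrite natrD natrM.
field; by rewrite ?n1ne0 ?pnatr_eq0.
Qed.

Lemma hh_half k : hh 2^-1 k = 2 * oharm k.
Proof.
elim: k => [|k IH]; first by rewrite /oharm big_geq // mulr0.
have hS : oharm k.+1 = oharm k + ((2*k.+1-1)%N%:R)^-1 by rewrite /oharm big_nat_recr.
rewrite /= IH hS.
rewrite (_ : (2 * k.+1 - 1 = 2 * k + 1)%N); last by lia.
rewrite natrD natrM mulrDr.
have hk := ler0n rat k.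
have h1 : 2^-1 + k%:R != 0 :> rat by rewrite gt_eqF //; lra.
have h2 : 2 * k%:R + 1 != 0 :> rat by rewrite gt_eqF //; lra.
by field.
Qed.

Lemma harmS m : harm m.+1 = harm m + (m.+1%:R)^-1.
Proof. by rewrite /harm big_nat_recr. Qed.

Lemma harm1 : harm 1 = 1.
Proof. by rewrite /harm big_nat1 invr1. Qed.

Lemma hh_nat q n : hh q.+1%:R n = harm (q + n) - harm q.
Proof.
elim: n => [|n IH]; first by rewrite addn0 subrr.
rewrite /= IH addnS harmS -natrD addSn; ring.
Qed.

Lemma rf_S s n : rf s n.+1 = rf s n * (s + n%:R) * 4 / (n.+1)%:R.
Proof. by []. Qed.

Lemma rf_shift s m : rf s m.+1 = s * 4 / m.+1%:R * rf (s + 1) m.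
Proof.
elim: m => [|m IH]; first by rewrite /= !mul1r addr0 mulr1.
have hm := ler0n rat m.
rewrite rf_S IH rf_S -[m.+1]addn1 natrD.
field.
by apply/andP; split; rewrite gt_eqF //; lra.
Qed.

Lemma catalan_rf m : catalan m = - 2^-1 * rf (- 2^-1) m.+1.
Proof.
rewrite rf_shift (_ : - 2^-1 + 1 = 2^-1 :> rat); last by field.
rewrite rf_half /catalan; field.
by rewrite n1ne0.
Qed.

Lemma posne (x : rat) : 0 < x -> forall k, x + k%:R != 0.
Proof. move=> hx k; have := ler0n rat k; move=> hk; rewrite gt_eqF //; lra. Qed.

Lemma part1 (n p : nat) :
    \sum_(0 <= j < n.+1)
        'C(p + j, j)%:R * 'C(2 * (n - j), n - j)%:R * 4 ^+ j * oharm (n - j)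
    = (2 ^+ (2 * n) / 2) * 'C(n + p + 1, n)%:R * (harm (n + p + 1) - harm (p + 1))
      - \sum_(1 <= j < n.+1)
          'C(p + j, j - 1)%:R * 4 ^+ (j - 1) * catalan (n - j)
            * (harm (p + j) - harm (p + 1)) :> rat.
Proof.
have L1 : \sum_(0 <= j < n.+1)
        'C(p + j, j)%:R * 'C(2 * (n - j), n - j)%:R * 4 ^+ j * oharm (n - j)
   = 2^-1 * \sum_(0 <= j < n.+1) gg 2^-1 j * rf p.+1%:R (n - j)%N.
  rewrite big_distrr big_nat_rev /=.
  apply: eq_big_nat => j /andP[_ hj].
  rewrite add0n subSS subKn ?(ltnSE hj) // /gg rf_nat rf_half hh_half.
  by field.
have hp := ler0n rat p.
have ht : 2 * 2^-1 = 1 :> rat by rewrite mulfV.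
have ht0 : 0 < 2^-1 :> rat by rewrite invr_gt0 ltr0n.
have hp1 : 1 <= p.+1%:R :> rat by rewrite ler1n.
have hp2 : 2 <= p.+2%:R :> rat by rewrite ler_nat.
have hpos : 0 < 2^-1 + p.+1%:R :> rat.
  lra.
have hpos2 : 0 < p.+2%:R - 2^-1 :> rat by lra.
have hpos3 : 0 < p.+2%:R :> rat by lra.
rewrite L1 conv_g; [| apply: posne; by rewrite invr_gt0 ltr0n | exact: posne].
have L2 : \sum_(1 <= j < n.+1)
          'C(p + j, j - 1)%:R * 4 ^+ (j - 1) * catalan (n - j)
            * (harm (p + j) - harm (p + 1))
   = - 2^-1 * \sum_(0 <= i < n) gg p.+2%:R i * rf (- 2^-1) (n - i)%N.
  rewrite big_add1 /= big_distrr /=.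
  apply: eq_big_nat => i /andP[_ hi].
  rewrite /gg rf_nat hh_nat catalan_rf subSS subn0 subnSK //.
  rewrite addn1 addnS addSn. ring.
have L3 : \sum_(0 <= i < n) gg p.+2%:R i * rf (- 2^-1) (n - i)%N
   = gg (p.+2%:R - 2^-1) n - gg p.+2%:R n.
  rewrite -conv_g; [| exact: posne | exact: posne].
  rewrite big_nat_recr //= subnn mulr1; ring.
rewrite L2 L3.
have E : p.+2%:R - 2^-1 = 2^-1 + p.+1%:R :> rat by rewrite [p.+2%:R]mulrS; lra.
have E4 : (2:rat) ^+ (2 * n) = 4 ^+ n by rewrite exprM; congr (_ ^+ _); ring.
rewrite E E4 (_ : (n + p + 1 = p.+1 + n)%N); last by lia.
rewrite addn1 /gg rf_nat hh_nat.
ring.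
Qed.

Lemma part2 (n : nat) :
    \sum_(0 <= j < n.+1) 'C(2 * j, j)%:R * oharm j / 4 ^+ j
    = (n.+1)%:R / 2 * (harm n.+1 - 1)
      - \sum_(1 <= j < n.+1)
          j%:R * catalan (n - j) / 4 ^+ (n.+1 - j) * (harm j - 1) :> rat.
Proof.
have P := part1 n 0.
have h4 : (4:rat)^+n != 0 by rewrite expf_neq0.
apply: (mulfI h4).
have E1 : 4^+n * \sum_(0 <= j < n.+1) 'C(2 * j, j)%:R * oharm j / 4 ^+ j
  = \sum_(0 <= j < n.+1)
        'C(0 + j, j)%:R * 'C(2 * (n - j), n - j)%:R * 4 ^+ j * oharm (n - j) :> rat.
  rewrite big_distrr [RHS]big_nat_rev /=. apply: eq_big_nat => j /andP[_ hj].
  have hj' := ltnSE hj.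
  rewrite add0n subSS subKn // binn.
  have e : (4:rat)^+n = 4^+j * 4^+(n-j) by rewrite -exprD subnKC.
  rewrite e; field; by rewrite expf_neq0.
have E2 : 4^+n * \sum_(1 <= j < n.+1)
          j%:R * catalan (n - j) / 4 ^+ (n.+1 - j) * (harm j - 1)
  = \sum_(1 <= j < n.+1)
          'C(0 + j, j - 1)%:R * 4 ^+ (j - 1) * catalan (n - j)
            * (harm (0 + j) - harm (0 + 1)) :> rat.
  rewrite mulr_sumr; apply: eq_big_nat => j /andP[hj1 hj2].
  case: j hj1 hj2 => // i _ hi.
  rewrite add0n !subSS subn0 binSn add0n harm1.
  have e : (4:rat)^+n = 4^+i * 4^+(n-i) by rewrite -exprD subnKC // ltnW.
  rewrite e; field; by rewrite expf_neq0.
have E4 : (2:rat) ^+ (2 * n) = 4 ^+ n by rewrite exprM; congr (_ ^+ _); ring.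
rewrite mulrBr E1 E2 P addn0 addn1 binSn add0n harm1 E4.
ring.
Qed.

Theorem theorem6 :
  (forall n p : nat,
    \sum_(0 <= j < n.+1)
        'C(p + j, j)%:R * 'C(2 * (n - j), n - j)%:R * 4 ^+ j * oharm (n - j)
    = (2 ^+ (2 * n) / 2) * 'C(n + p + 1, n)%:R * (harm (n + p + 1) - harm (p + 1))
      - \sum_(1 <= j < n.+1)
          'C(p + j, j - 1)%:R * 4 ^+ (j - 1) * catalan (n - j)
            * (harm (p + j) - harm (p + 1)) :> rat)
  /\
  (forall n : nat,
    \sum_(0 <= j < n.+1) 'C(2 * j, j)%:R * oharm j / 4 ^+ j
    = (n.+1)%:R / 2 * (harm n.+1 - 1)
      - \sum_(1 <= j < n.+1)
          j%:R * catalan (n - j) / 4 ^+ (n.+1 - j) * (harm j - 1) :> rat).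
Proof. split; [exact: part1 | exact: part2]. Qed.
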